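(* Let $G=(V,E)$ be a multigraph with vertices $u_1,\dots,u_k$ ($k\ge2$) and edges $e_1,\dots,e_\ell$ with $\ell>2k$, and consider the fair division instance $\mathcal{I}(G)$ described in the context. If $G$ has an independent set of size $t$, then $\mathcal{I}(G)$ has an EF1 allocation with social welfare at least $t$.
   Context: Instance $\mathcal{I}(G)$: agents are $a_i^{(j)}$ ($1\le i\le\ell$, $1\le j\le k$) and $s^{(j)}$ ($1\le j\le k$), so $n=k\ell+k$. Items are $b_r^{(j)}$ ($1\le r\le k$, $1\le j\le k$), with $B^{(j)}=\{b_1^{(j)},\dots,b_k^{(j)}\}$, and $c_1,\dots,c_{k^2}$ forming $C$, so $m=2k^2$. Let $\tau=2/k^2$. Agent $s^{(j)}$ values each item of $B^{(j)}$ at $1/k$ and every other item at $0$. If edge $e_i$ has endpoints $u_{i_1},u_{i_2}$, agent $a_i^{(j)}$ values each of $b_{i_1}^{(j)},b_{i_2}^{(j)}$ at $\tau/2$, each item of $C$ at $(1-\tau)/k^2$, and every other item at $0$. Valuations are additive (and normalized). An allocation is a partition of the items among agents; it is EF1 if for all agents $x\ne y$ with $A_y\ne\emptyset$ there is $g\in A_y$ with $v_x(A_x)\ge v_x(A_y\setminus\{g\})$; social welfare is $\sum_x v_x(A_x)$. An independent set is a set of vertices no two of which are joined by an edge. *)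

(* Defs.v *)
From mathcomp Require Import all_boot all_order all_algebra.
Set Implicit Arguments. Unset Strict Implicit. Unset Printing Implicit Defensive.
Import Order.TTheory GRing.Theory Num.Theory.
Local Open Scope ring_scope.

(* Agents: inl (i, j) = a_i^(j) ; inr j = s^(j). *)
Definition agent (k l : nat) : finType := (('I_l * 'I_k)%type + 'I_k)%type.
(* Items: inl (r, j) = b_r^(j) ; inr c = c_c (c < k^2). *)
Definition item (k : nat) : finType := (('I_k * 'I_k)%type + 'I_(k * k))%type.

Section Instance.
Variables (R : realFieldType) (k l : nat) (ends1 ends2 : 'I_l -> 'I_k).

Definition tau : R := 2 / (k * k)%:R.

Definition val (x : agent k l) (g : item k) : R :=
  match x, g with
  | inr j, inl (_, j') => if j' == j then 1 / k%:R else 0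
  | inr _, inr _ => 0
  | inl (i, j), inl (r, j') =>
      if (j' == j) && ((r == ends1 i) || (r == ends2 i)) then tau / 2 else 0
  | inl _, inr _ => (1 - tau) / (k * k)%:R
  end.

Definition valS (x : agent k l) (S : {set item k}) : R := \sum_(g in S) val x g.

Definition bundle (A : {ffun item k -> agent k l}) (x : agent k l) : {set item k} :=
  [set g | A g == x].

Definition EF1 (A : {ffun item k -> agent k l}) : Prop :=
  forall x y : agent k l, x != y -> bundle A y != set0 ->
    exists2 g, g \in bundle A y &
      valS x (bundle A y :\ g) <= valS x (bundle A x).

Definition social_welfare (A : {ffun item k -> agent k l}) : R :=
  \sum_(x : agent k l) valS x (bundle A x).

End Instance.

Definition independent (k l : nat) (ends1 ends2 : 'I_l -> 'I_k) (S : {set 'I_k}) : Prop :=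
  forall e : 'I_l, ~~ ((ends1 e \in S) && (ends2 e \in S)).

(* Main.v *)
Require Import Defs.
From mathcomp Require Import all_boot all_order all_algebra.
From mathcomp Require Import zify.
Import Order.TTheory GRing.Theory Num.Theory.
Local Open Scope ring_scope.

Section Proof.
Variables (R : realFieldType) (k l : nat) (ends1 ends2 : 'I_l -> 'I_k).
Hypothesis hk : (2 <= k)%N.
Hypothesis hl : (2 * k < l)%N.

Lemma lt1 (r : 'I_k) : (r < l)%N.
Proof. have := ltn_ord r; lia. Qed.

Lemma lt2 (c : 'I_(k * k)) : (k + c %/ k < l)%N.
Proof.
have hc : (c %/ k < k)%N by rewrite ltn_divLR ?ltn_ord //; lia.
lia.
Qed.

Lemma lt3 (c : 'I_(k * k)) : (c %% k < k)%N.
Proof. rewrite ltn_mod; lia. Qed.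

Definition h (g : item k) : ('I_l * 'I_k)%type :=
  match g with
  | inl (r, j) => (Ordinal (lt1 r), j)
  | inr c => (Ordinal (lt2 c), Ordinal (lt3 c))
  end.

Lemma h_inj : injective h.
Proof.
move=> [[r j]|c] [[r' j']|c'] /= [].
- by move=> /val_inj <- ->.
- move=> E _; exfalso; have := ltn_ord r; rewrite E ltnNge leq_addr //=.
- move=> E _; exfalso; have := ltn_ord r'; rewrite -E ltnNge leq_addr //=.
- move=> E1 E2; congr inr; apply: val_inj => /=.
  rewrite (divn_eq c k) (divn_eq c' k) E2; congr (_ * _ + _)%N; lia.
Qed.

Lemma val_ge0 x g : 0 <= Defs.val R ends1 ends2 x g.
Proof.
have kpos : 0 < k%:R :> R by rewrite ltr0n; lia.
have kkpos : 0 < (k * k)%:R :> R by rewrite ltr0n; lia.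
have tau_ge0 : 0 <= tau R k by rewrite /tau divr_ge0 // ltW.
move: x g => [[i j]|j] [[r j']|c] /=.
- by case: ifP => // _; rewrite divr_ge0.
- apply: divr_ge0; last exact: ltW.
  rewrite subr_ge0 /tau ler_pdivrMr // mul1r ler_nat; nia.
- by case: ifP => // _; rewrite divr_ge0 // ltW.
- by [].
Qed.

Lemma valS_ge0 x B : 0 <= valS R ends1 ends2 x B.
Proof. by apply: sumr_ge0 => g _; apply: val_ge0. Qed.

End Proof.

Theorem mainTheorem12 (R : realFieldType) (k l : nat)
    (ends1 ends2 : 'I_l -> 'I_k)
    (loopless : forall e, ends1 e != ends2 e)
    (hk : (2 <= k)%N) (hl : (2 * k < l)%N)
    (S : {set 'I_k}) (t : nat) :
  independent ends1 ends2 S -> #|S| = t ->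
  exists A : {ffun item k -> agent k l},
    EF1 R ends1 ends2 A /\ t%:R <= social_welfare R ends1 ends2 A.
Proof.
move=> indS tS.
pose H := @h k l hk hl.
pose A : {ffun item k -> agent k l} := [ffun g =>
  match g with
  | inl (r, j) => if r \in S then inr j else inl (H g)
  | inr _ => inl (H g)
  end].
have Ainl g p : A g = inl p -> p = H g.
  rewrite ffunE; case: g => [[r j]|c] //; first case: ifP => // _.
    by case.
  by case.
have F1 g g' p : A g = inl p -> A g' = inl p -> g = g'.
  move=> /Ainl E1 /Ainl E2; apply: (@h_inj k l hk hl); by rewrite -/H -E1 -E2.
have F2 g j : A g = inr j -> exists2 r, r \in S & g = inl (r, j).
  rewrite ffunE; case: g => [[r j']|c] //; case: ifP => // rS [<-].
  by exists r.
have F3 r j : r \in S -> A (inl (r, j)) = inr j.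
  by move=> rS; rewrite ffunE rS.
have vge0 := @val_ge0 R k l ends1 ends2 hk hl.
have vSge0 x B : 0 <= valS R ends1 ends2 x B.
  by apply: sumr_ge0 => g _; apply: vge0.
have U x j g1 g2 : x != inr j -> A g1 = inr j -> A g2 = inr j ->
    Defs.val R ends1 ends2 x g1 != 0 -> Defs.val R ends1 ends2 x g2 != 0 ->
    g1 = g2.
  move=> xj /F2 [r1 r1S ->] /F2 [r2 r2S ->].
  case: x xj => [[i j']|j'] /= xj.
  - case: ifP => [/andP [_ h1] _|]; last by rewrite eqxx.
    case: ifP => [/andP [_ h2] _|]; last by rewrite eqxx.
    have := indS i.
    move=> /negP nS; case/orP: h1 => /eqP E1; case/orP: h2 => /eqP E2;
      subst r1 r2 => //; exfalso; apply: nS; apply/andP; split => //.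
  - have [E|ne] := eqVneq j j'; first by move: xj; rewrite E eqxx.
    by rewrite eqxx.
have bundle_inr j : bundle A (inr j) = [set inl (r, j) | r in S].
  apply/setP => g; rewrite inE; apply/eqP/imsetP.
    by move/F2 => [r rS ->]; exists r.
  by move=> [r rS ->]; apply: F3.
exists A; split.
- move=> x y xy ney.
  case: y xy ney => [p|j] xy ney.
  + case/set0Pn: ney => g0 g0in; exists g0 => //.
    have -> : bundle A (inl p) :\ g0 = set0.
      apply/setP => g; rewrite !inE; apply/negbTE; apply/andP => [[ne /eqP Ag]].
      move: g0in; rewrite inE => /eqP Ag0.
      by move: ne; rewrite (F1 _ _ _ Ag Ag0) eqxx.
    by rewrite {1}/valS big_set0 vSge0.
  + case: (pickP (fun g => (g \in bundle A (inr j)) &&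
                   (Defs.val R ends1 ends2 x g != 0))) => [g0 /andP [g0in g0nz] | none].
    * exists g0 => //.
      rewrite /valS big1 ?vSge0 // => g; rewrite !inE => /andP [ne /eqP Ag].
      apply/eqP; apply: contraNT ne => gnz; apply/eqP.
      move: g0in; rewrite inE => /eqP Ag0.
      exact: (U x j g g0 xy Ag Ag0 gnz g0nz).
    * case/set0Pn: ney => g0 g0in; exists g0 => //.
      rewrite /valS big1 ?vSge0 // => g; rewrite !inE => /andP [_ gin].
      by move: (none g); rewrite inE gin /= => /negbT; rewrite negbK => /eqP.
- rewrite /social_welfare big_sumType /=.
  have kpos : 0 < k%:R :> R by rewrite ltr0n; lia.
  have -> : \sum_(j < k) valS R ends1 ends2 (inr j) (bundle A (inr j)) = t%:R.
    transitivity (\sum_(j < k) (t%:R / k%:R : R)).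
      apply: eq_bigr => j _; rewrite bundle_inr /valS big_imset /=; last first.
        by move=> r1 r2 _ _ [].
      rewrite (eq_bigr (fun _ => 1 / k%:R)); last by move=> r _; rewrite eqxx.
      by rewrite sumr_const -tS -[LHS]mulr_natl mul1r.
    rewrite sumr_const card_ord -[LHS]mulr_natl mulrC divfK //.
    by rewrite gt_eqF.
  by rewrite lerDr; apply: sumr_ge0 => x _; apply: vSge0.
Qed.
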